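(* In any execution of Algorithm $\mathsf{AG}$ (described in the context) with a guild, there exists a process $p_i$ in the maximal guild such that the set $S_i$ that $p_i$ sent in its $\mathrm{DistributeS}$ message is, after the execution of the algorithm, contained in the set $U_k$ of every process $p_k$ in the maximal guild.
   Context: System model: a finite set $\mathcal{P}=\{p_1,\dots,p_n\}$ of processes communicating asynchronously over authenticated point-to-point links; every message sent from a correct process to a correct process is eventually delivered. A process that follows its protocol is correct; others (faulty, Byzantine) may behave arbitrarily. $F\subseteq\mathcal{P}$ denotes the (unknown) set of faulty processes of an execution. For $\mathcal{A}\subseteq 2^{\mathcal{P}}$, write $\mathcal{A}^*=\{A' : A'\subseteq A,\ A\in\mathcal{A}\}$. An asymmetric fail-prone system is an array $\mathbb{F}=[\mathcal{F}_1,\dots,\mathcal{F}_n]$ with $\mathcal{F}_i\subseteq 2^{\mathcal{P}}$. An asymmetric Byzantine quorum system for $\mathbb{F}$ is an array $\mathbb{Q}=[\mathcal{Q}_1,\dots,\mathcal{Q}_n]$ with $\mathcal{Q}_i\subseteq 2^{\mathcal{P}}$ (quorums for $p_i$) satisfying: (consistency) for all $i,j$, all $Q_i\in\mathcal{Q}_i$, $Q_j\in\mathcal{Q}_j$, $F_{ij}\in\mathcal{F}_i^*\cap\mathcal{F}_j^*$: $Q_i\cap Q_j\not\subseteq F_{ij}$; (availability) for all $i$ and $F_i\in\mathcal{F}_i$ there is $Q_i\in\mathcal{Q}_i$ with $F_i\cap Q_i=\emptyset$. A kernel for $p_i$ is a set $K\subseteq\mathcal{P}$ intersecting every $Q\in\mathcal{Q}_i$;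 $\mathcal{K}_i$ is the set of kernels for $p_i$. A correct process $p_i$ is wise if $F\in\mathcal{F}_i^*$. A guild is a set $\mathcal{G}$ of wise processes such that every $p_i\in\mathcal{G}$ has some $Q_i\in\mathcal{Q}_i$ with $Q_i\subseteq\mathcal{G}$. An execution with a guild is one in which a nonempty guild exists; the maximal guild $\mathcal{G}_{max}$ is the union of all guilds. Asymmetric reliable broadcast (arb-broadcast / arb-deliver) guarantees, in every execution with a guild: if a correct process arb-broadcasts $m$, every process of $\mathcal{G}_{max}$ eventually arb-delivers $m$; for each sender, all processes of $\mathcal{G}_{max}$ that arb-deliver from it deliver the same message; if some process of $\mathcal{G}_{max}$ arb-delivers a message from a sender, all processes of $\mathcal{G}_{max}$ eventually arb-deliver a message from that sender; a correct process arb-delivers at most one message per sender, and from a correct sender only a message it arb-broadcast. Algorithm $\mathsf{AG}$ (code of $p_i$; each correct process invokes ag-propose$(x_i)$ exactly once; each guarded ''upon there being ...'' action executes at most once, message handlers once per message). State: sets $S_i,T_i,U_i$ initially empty, boolean $sentT$ initially false. (1) Upon ag-propose$(x_i)$: arb-broadcast $(p_i,x_i)$. (2) Upon arb-delivering $(p_j,x_j)$ from $p_j$: $S_i\gets S_i\cup\{(p_j,x_j)\}$. (3) Upon there being $Q\in\mathcal{Q}_i$ such that for every $p_j\in Q$ some pair $(p_j,\cdot)\in S_i$: send $\langle\mathrm{DistributeS},p_i,S_i\rangle$ to all. (4) For a received $\langle\mathrm{DistributeS},p_j,S_j\rangle$: once $S_j\subseteq S_i$, provided $sentT$ is false at that moment,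 set $T_i\gets T_i\cup S_j$ and send $\langle\mathrm{Ack},p_i\rangle$ to $p_j$. (5) Upon Ack received from every member of some $Q\in\mathcal{Q}_i$: send Ready to all. (6) Upon Ready received from every member of some $Q\in\mathcal{Q}_i$: send Confirm to all. (7) Upon Confirm received from every member of some $K\in\mathcal{K}_i$: send Confirm to all. (8) Upon Confirm received from every member of some $Q\in\mathcal{Q}_i$: send $\langle\mathrm{DistributeT},p_i,T_i\rangle$ to all and set $sentT\gets$ true. (9) For a received $\langle\mathrm{DistributeT},p_j,T_j\rangle$ from $p_j$: once $T_j\subseteq S_i$, set $U_i\gets U_i\cup T_j$. (10) Upon DistributeT received from every member of some $Q\in\mathcal{Q}_i$: ag-deliver$(U_i)$. *)

(* Defs.v *)
From mathcomp Require Import all_boot.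
Set Implicit Arguments.
Unset Strict Implicit.
Unset Printing Implicit Defensive.

Section AG.

Variable P : finType.
Variable V : Type.

Definition in_star (A : {set {set P}}) (X : {set P}) : Prop :=
  exists2 Y, Y \in A & X \subset Y.

Definition is_abqs (FP Qs : P -> {set {set P}}) : Prop :=
  (forall i j (Qi Qj Fij : {set P}),
      Qi \in Qs i -> Qj \in Qs j -> in_star (FP i) Fij -> in_star (FP j) Fij ->
      ~~ (Qi :&: Qj \subset Fij))
  /\
  (forall i (Fi : {set P}), Fi \in FP i ->
      exists2 Qi, Qi \in Qs i & [disjoint Fi & Qi]).

Definition is_kernel (Qs : P -> {set {set P}}) (i : P) (K : {set P}) : Prop :=
  forall Q, Q \in Qs i -> K :&: Q != set0.

(* p_i is wise (F is the actual set of faulty processes) *)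
Definition wise (FP : P -> {set {set P}}) (F : {set P}) (i : P) : Prop :=
  i \notin F /\ in_star (FP i) F.

Definition is_guild (FP Qs : P -> {set {set P}}) (F : {set P}) (G : {set P}) : Prop :=
  forall i, i \in G -> wise FP F i /\ exists2 Q, Q \in Qs i & Q \subset G.

(* membership in the maximal guild (union of all guilds) *)
Definition in_Gmax (FP Qs : P -> {set {set P}}) (F : {set P}) (i : P) : Prop :=
  exists2 G, is_guild FP Qs F G & i \in G.

Definition exec_with_guild (FP Qs : P -> {set {set P}}) (F : {set P}) : Prop :=
  exists2 G, is_guild FP Qs F G & G != set0.

Definition pset := P * V -> Prop.
Definition psubset (A B : pset) : Prop := forall z, A z -> B z.

(* point-to-point messages (the sender is known from the authenticated link) *)
Inductive msg :=
| MDistS of pset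
| MAck
| MReady
| MConfirm
| MDistT of pset.

Definition isAck (m : msg) : Prop := if m is MAck then True else False.
Definition isReady (m : msg) : Prop := if m is MReady then True else False.
Definition isConfirm (m : msg) : Prop := if m is MConfirm then True else False.
Definition isDistT (m : msg) : Prop := if m is MDistT _ then True else False.

Record lstate := LState {
  proposed : Prop;
  Sset : pset;
  Tset : pset;
  Uset : pset;
  sentT : Prop;
  inbox : seq (P * msg);
  handled : nat -> Prop;       (* inbox entries whose handler (4)/(9) ran *)
  fired3 : Prop; fired5 : Prop; fired6 : Prop; fired7 : Prop;
  fired8 : Prop; fired10 : Prop;
  Ssent : option pset;
  agdelivered : option pset
}.

Definition init_state : lstate :=
  LState False (fun _ => False) (fun _ => False) (fun _ => False) False [::]
         (fun _ => False) False False False False False False None None.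

Inductive event :=
| EPropose of V                  (* ag-propose(x); action (1): arb-broadcast *)
| EArbDel of P & V
| ERecv of P & nat & nat & msg   (* receive m from p_j; for a correct p_j the
                                    two nats identify the message: the k-th
                                    message p_j sent at time s *)
| EA3
| EA4 of nat                     (* action (4) on inbox entry k, sentT false *)
| EA4skip of nat                 (* action (4) on inbox entry k, sentT true: no effect *)
| EA5 | EA6 | EA7 | EA8
| EA9 of nat
| EA10.

Definition entry (s : lstate) (k : nat) : option (P * msg) := onth (inbox s) k.

Definition received (s : lstate) (j : P) (kind : msg -> Prop) : Prop :=
  exists k m, entry s k = Some (j, m) /\ kind m.

Definition punion (A B : pset) : pset := fun z => A z \/ B z.

Definition mark (h : nat -> Prop) (k : nat) : nat -> Prop := fun k' => k' = k \/ h k'.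

Definition step (s : lstate) (e : event) : lstate :=
  match e with
  | EPropose _ =>
      LState True (Sset s) (Tset s) (Uset s) (sentT s) (inbox s) (handled s)
        (fired3 s) (fired5 s) (fired6 s) (fired7 s) (fired8 s) (fired10 s)
        (Ssent s) (agdelivered s)
  | EArbDel j x =>
      LState (proposed s) (punion (Sset s) (fun z => z = (j, x))) (Tset s) (Uset s)
        (sentT s) (inbox s) (handled s)
        (fired3 s) (fired5 s) (fired6 s) (fired7 s) (fired8 s) (fired10 s)
        (Ssent s) (agdelivered s)
  | ERecv j _ _ m =>
      LState (proposed s) (Sset s) (Tset s) (Uset s) (sentT s) (rcons (inbox s) (j, m))
        (handled s)
        (fired3 s) (fired5 s) (fired6 s) (fired7 s) (fired8 s) (fired10 s)
        (Ssent s) (agdelivered s)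
  | EA3 =>
      LState (proposed s) (Sset s) (Tset s) (Uset s) (sentT s) (inbox s) (handled s)
        True (fired5 s) (fired6 s) (fired7 s) (fired8 s) (fired10 s)
        (Some (Sset s)) (agdelivered s)
  | EA4 k =>
      let T' := if entry s k is Some (_, MDistS Sj) then punion (Tset s) Sj
                else Tset s in
      LState (proposed s) (Sset s) T' (Uset s) (sentT s) (inbox s) (mark (handled s) k)
        (fired3 s) (fired5 s) (fired6 s) (fired7 s) (fired8 s) (fired10 s)
        (Ssent s) (agdelivered s)
  | EA4skip k =>
      LState (proposed s) (Sset s) (Tset s) (Uset s) (sentT s) (inbox s)
        (mark (handled s) k)
        (fired3 s) (fired5 s) (fired6 s) (fired7 s) (fired8 s) (fired10 s)
        (Ssent s) (agdelivered s)
  | EA5 =>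
      LState (proposed s) (Sset s) (Tset s) (Uset s) (sentT s) (inbox s) (handled s)
        (fired3 s) True (fired6 s) (fired7 s) (fired8 s) (fired10 s)
        (Ssent s) (agdelivered s)
  | EA6 =>
      LState (proposed s) (Sset s) (Tset s) (Uset s) (sentT s) (inbox s) (handled s)
        (fired3 s) (fired5 s) True (fired7 s) (fired8 s) (fired10 s)
        (Ssent s) (agdelivered s)
  | EA7 =>
      LState (proposed s) (Sset s) (Tset s) (Uset s) (sentT s) (inbox s) (handled s)
        (fired3 s) (fired5 s) (fired6 s) True (fired8 s) (fired10 s)
        (Ssent s) (agdelivered s)
  | EA8 =>
      LState (proposed s) (Sset s) (Tset s) (Uset s) True (inbox s) (handled s)
        (fired3 s) (fired5 s) (fired6 s) (fired7 s) True (fired10 s)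
        (Ssent s) (agdelivered s)
  | EA9 k =>
      let U' := if entry s k is Some (_, MDistT Tj) then punion (Uset s) Tj
                else Uset s in
      LState (proposed s) (Sset s) (Tset s) U' (sentT s) (inbox s) (mark (handled s) k)
        (fired3 s) (fired5 s) (fired6 s) (fired7 s) (fired8 s) (fired10 s)
        (Ssent s) (agdelivered s)
  | EA10 =>
      LState (proposed s) (Sset s) (Tset s) (Uset s) (sentT s) (inbox s) (handled s)
        (fired3 s) (fired5 s) (fired6 s) (fired7 s) (fired8 s) True
        (Ssent s) (Some (Uset s))
  end.

Definition to_all (m : msg) : seq (P * msg) := [seq (q, m) | q <- enum P].

Definition sends (s : lstate) (e : event) : seq (P * msg) :=
  match e with
  | EA3 => to_all (MDistS (Sset s))
  | EA4 k => if entry s k is Some (j, _) then [:: (j, MAck)] else [::]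
  | EA5 => to_all MReady
  | EA6 => to_all MConfirm
  | EA7 => to_all MConfirm
  | EA8 => to_all (MDistT (Tset s))
  | _ => [::]
  end.

Definition enabled (Qs : P -> {set {set P}}) (i : P) (s : lstate) (e : event) : Prop :=
  match e with
  | EPropose _ => ~ proposed s
  | EArbDel _ _ => True          (* constrained by the arb properties *)
  | ERecv _ _ _ _ => True        (* constrained by the network properties *)
  | EA3 => ~ fired3 s /\
      exists2 Q, Q \in Qs i & forall j, j \in Q -> exists x, Sset s (j, x)
  | EA4 k => ~ handled s k /\
      (exists j Sj, entry s k = Some (j, MDistS Sj) /\ psubset Sj (Sset s)) /\ ~ sentT s
  | EA4skip k => ~ handled s k /\
      (exists j Sj, entry s k = Some (j, MDistS Sj) /\ psubset Sj (Sset s)) /\ sentT s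
  | EA5 => ~ fired5 s /\
      exists2 Q, Q \in Qs i & forall j, j \in Q -> received s j isAck
  | EA6 => ~ fired6 s /\
      exists2 Q, Q \in Qs i & forall j, j \in Q -> received s j isReady
  | EA7 => ~ fired7 s /\
      exists2 K, is_kernel Qs i K & forall j, j \in K -> received s j isConfirm
  | EA8 => ~ fired8 s /\
      exists2 Q, Q \in Qs i & forall j, j \in Q -> received s j isConfirm
  | EA9 k => ~ handled s k /\
      (exists j Tj, entry s k = Some (j, MDistT Tj) /\ psubset Tj (Sset s))
  | EA10 => ~ fired10 s /\
      exists2 Q, Q \in Qs i & forall j, j \in Q -> received s j isDistT
  end.

Definition local_action (e : event) : Prop :=
  match e with
  | EPropose _ | EArbDel _ _ | ERecv _ _ _ _ => False
  | _ => True
  end.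

(* An execution is an infinite sequence of steps; at each step at most one
   process takes one event. *)
Definition trace := nat -> option (P * event).

(* local state of p_i before step t *)
Fixpoint st (ev : trace) (i : P) (t : nat) : lstate :=
  match t with
  | 0 => init_state
  | t'.+1 =>
      match ev t' with
      | Some (q, e) => if q == i then step (st ev i t') e else st ev i t'
      | None => st ev i t'
      end
  end.

Definition sent_at (ev : trace) (j : P) (s : nat) : seq (P * msg) :=
  match ev s with
  | Some (q, e) => if q == j then sends (st ev j s) e else [::]
  | None => [::]
  end.

Definition arbdel (ev : trace) (t : nat) (i j : P) (x : V) : Prop :=
  ev t = Some (i, EArbDel j x).

Definition arbcast (ev : trace) (j : P) (x : V) : Prop :=
  exists t, ev t = Some (j, EPropose x).

(* ev is an execution of AG with faulty set F, in which arb-broadcast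
   satisfies its specification (stated for executions with a guild). *)
Definition AG_execution (FP Qs : P -> {set {set P}}) (F : {set P}) (ev : trace) : Prop :=
  (forall t i e, ev t = Some (i, e) -> i \notin F -> enabled Qs i (st ev i t) e)
  /\
  (* every correct process invokes ag-propose (exactly once, by the guard) *)
  (forall i, i \notin F -> exists x, arbcast ev i x)
  /\
  (* weak fairness of guarded actions of correct processes *)
  (forall i e t0, i \notin F -> local_action e ->
      (forall t, t0 <= t -> enabled Qs i (st ev i t) e) ->
      exists2 t, t0 <= t & ev t = Some (i, e))
  /\
  (* authenticated links: a message from a correct sender was sent to the
     receiver earlier and is received at most once *)
  (forall t i j s k m, i \notin F -> j \notin F -> ev t = Some (i, ERecv j s k m) ->
      s < t /\ onth (sent_at ev j s) k = Some (i, m) /\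
      forall t' m', ev t' = Some (i, ERecv j s k m') -> t' = t)
  /\
  (* reliable links between correct processes *)
  (forall i j s k m, i \notin F -> j \notin F ->
      onth (sent_at ev j s) k = Some (i, m) ->
      exists t, ev t = Some (i, ERecv j s k m))
  /\
  (* asymmetric reliable broadcast *)
  ((forall j x, j \notin F -> arbcast ev j x ->
       forall k, in_Gmax FP Qs F k -> exists t, arbdel ev t k j x)
   /\ (forall j k1 k2 t1 t2 x1 x2, in_Gmax FP Qs F k1 -> in_Gmax FP Qs F k2 ->
       arbdel ev t1 k1 j x1 -> arbdel ev t2 k2 j x2 -> x1 = x2)
   /\ (forall j k t x, in_Gmax FP Qs F k -> arbdel ev t k j x ->
       forall k', in_Gmax FP Qs F k' -> exists t' x', arbdel ev t' k' j x')
   /\ (forall i j t1 t2 x1 x2, i \notin F ->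
       arbdel ev t1 i j x1 -> arbdel ev t2 i j x2 -> t1 = t2)
   /\ (forall i j t x, i \notin F -> j \notin F -> arbdel ev t i j x -> arbcast ev j x)).

End AG.

(* Main.v *)
Require Import Defs.
From mathcomp Require Import all_boot.
From Stdlib Require Import Classical.
Set Implicit Arguments.
Unset Strict Implicit.
Unset Printing Implicit Defensive.

#[local] Arguments EA3 {P V}.
#[local] Arguments EA5 {P V}.
#[local] Arguments EA6 {P V}.
#[local] Arguments EA7 {P V}.
#[local] Arguments EA8 {P V}.
#[local] Arguments EA10 {P V}.
#[local] Arguments MAck {P V}.
#[local] Arguments isAck {P V}.
#[local] Arguments isReady {P V}.
#[local] Arguments isConfirm {P V}.
#[local] Arguments isDistT {P V}.
#[local] Arguments MReady {P V}.
#[local] Arguments MConfirm {P V}.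

Lemma st_step (P : finType) V (ev : trace P V) i t e :
  ev t = Some (i, e) -> st ev i t.+1 = step (st ev i t) e.
Proof. by move=> /= ->; rewrite eqxx. Qed.

Lemma st_cases (P : finType) V (ev : trace P V) i t :
  st ev i t.+1 = st ev i t \/ exists e, ev t = Some (i, e) /\ st ev i t.+1 = step (st ev i t) e.
Proof.
rewrite /=; case: (ev t) => [[q e]|]; last by left.
case: eqP => [->|]; last by left.
by right; exists e.
Qed.

Definition mono_rel (P : finType) V (s s' : lstate P V) : Prop :=
  [/\ psubset (Sset s) (Sset s'), psubset (Tset s) (Tset s'),
      psubset (Uset s) (Uset s'), (sentT s -> sentT s') &
      exists r, inbox s' = inbox s ++ r].

Lemma mono_step (P : finType) V (s : lstate P V) e : mono_rel s (step s e).
Proof.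
case: e => [x|j x|j a b m|||||||||]; split => //=; try (by move=> z; left); try (by move=> z); try (by exists [::]; rewrite cats0);
  try (by []).
- by exists [:: (j, m)]; rewrite cats1.
- by move=> z; case: (entry s n) => [[? []]|] //=; left.
- by move=> z; case: (entry s n) => [[? []]|] //=; left.
Qed.

Lemma st_mono (P : finType) V (ev : trace P V) i t t' :
  t <= t' -> mono_rel (st ev i t) (st ev i t').
Proof.
move=> /subnKC <-; elim: (t' - t) => [|n IH].
  rewrite addn0; split => //; by exists [::]; rewrite cats0.
rewrite addnS; case: (st_cases ev i (t + n)) => [->//|[e [_ ->]]].
case: IH => h1 h2 h3 h4 [r hr]; case: (mono_step (st ev i (t + n)) e) => g1 g2 g3 g4 [r' hr'].
split; try (by move=> z /h1/g1); try (by move=> z /h2/g2); try (by move=> z /h3/g3);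
  try (by move=> /h4/g4).
by exists (r ++ r'); rewrite hr' hr catA.
Qed.

Lemma S_mono (P : finType) V (ev : trace P V) i t t' :
  t <= t' -> psubset (Sset (st ev i t)) (Sset (st ev i t')).
Proof. by move=> /(st_mono ev i) []. Qed.
Lemma T_mono (P : finType) V (ev : trace P V) i t t' :
  t <= t' -> psubset (Tset (st ev i t)) (Tset (st ev i t')).
Proof. by move=> /(st_mono ev i) []. Qed.
Lemma U_mono (P : finType) V (ev : trace P V) i t t' :
  t <= t' -> psubset (Uset (st ev i t)) (Uset (st ev i t')).
Proof. by move=> /(st_mono ev i) []. Qed.
Lemma sentT_mono (P : finType) V (ev : trace P V) i t t' :
  t <= t' -> sentT (st ev i t) -> sentT (st ev i t').
Proof. by move=> /(st_mono ev i) []. Qed.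

Lemma entry_mono (P : finType) V (ev : trace P V) i t t' k x :
  t <= t' -> entry (st ev i t) k = Some x -> entry (st ev i t') k = Some x.
Proof.
move=> /(st_mono ev i) [_ _ _ _ [r hr]]; rewrite /entry hr onth_cat => h.
by have := onthTE (inbox (st ev i t)) k; rewrite h /= => <-.
Qed.

Lemma entry_det (P : finType) V (ev : trace P V) i t t' k x y :
  entry (st ev i t) k = Some x -> entry (st ev i t') k = Some y -> x = y.
Proof.
case: (leqP t t') => [le|/ltnW le] h1 h2.
  by move: (entry_mono le h1); rewrite h2 => -[].
by move: (entry_mono le h2); rewrite h1 => -[].
Qed.

Lemma flag_event (P : finType) V (ev : trace P V) i (f : lstate P V -> Prop)
   (E : event P V -> Prop) :
  (forall s e, f (step s e) -> f s \/ E e) -> ~ f (init_state P V) ->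
  forall t, f (st ev i t) -> exists t' e, t' < t /\ E e /\ ev t' = Some (i, e).
Proof.
move=> hs h0; elim=> [//|t IH].
case: (st_cases ev i t) => [->|[e [he ->]]].
  by move=> /IH [t' [e [? ?]]]; exists t', e; split => //; apply: ltnW.
case/hs => [/IH [t' [e' [? ?]]]|hE]; first by exists t', e'; split => //; apply: ltnW.
by exists t, e.
Qed.

Lemma sentT_event (P : finType) V (ev : trace P V) i t :
  sentT (st ev i t) -> exists t', t' < t /\ ev t' = Some (i, EA8).
Proof.
move=> h; have [|//|t' [e [lt [-> ?]]]] := flag_event (f := fun s => sentT s) (E := eq EA8) _ _ h.
  by move=> s []; auto.
by exists t'.
Qed.

Definition fl3 (P : finType) V (s : lstate P V) := fired3 s.
Definition fl5 (P : finType) V (s : lstate P V) := fired5 s.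
Definition fl6 (P : finType) V (s : lstate P V) := fired6 s.
Definition fl7 (P : finType) V (s : lstate P V) := fired7 s.
Definition fl8 (P : finType) V (s : lstate P V) := fired8 s.

Lemma handled_event (P : finType) V (ev : trace P V) i t k :
  handled (st ev i t) k -> exists t' e, t' < t /\
     (e = EA4 P V k \/ e = EA4skip P V k \/ e = EA9 P V k) /\ ev t' = Some (i, e).
Proof.
apply: (flag_event (f := fun s => handled s k)
   (E := fun e => e = EA4 P V k \/ e = EA4skip P V k \/ e = EA9 P V k)) => //.
move=> s [x|j x|j a b m||n|n|||||n|] //=; try (by left);
  by rewrite /mark => -[->|?]; auto.
Qed.

Lemma S_event (P : finType) V (ev : trace P V) i t z :
  Sset (st ev i t) z -> exists t', t' < t /\ ev t' = Some (i, EArbDel z.1 z.2).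
Proof.
move=> h; have [|//|t' [e [lt [-> ?]]]] :=
  flag_event (f := fun s => Sset s z) (E := eq (EArbDel z.1 z.2)) _ _ h.
  move=> s [x|j x|j a b m|||||||||] //=; try (by left).
  by case => [?|->]; auto.
by exists t'.
Qed.

Lemma entry_event (P : finType) V (ev : trace P V) i t k j m :
  entry (st ev i t) k = Some (j, m) -> exists t' a b, t' < t /\ ev t' = Some (i, ERecv j a b m).
Proof.
move=> h; have [||t' [e [lt [[a [b ->]] ?]]]] :=
  flag_event (f := fun s => entry s k = Some (j, m))
    (E := fun e => exists a b, e = ERecv j a b m) _ _ h.
- move=> s [x|j' x|j' a b m'|||||||||] //=; try (by left).
  rewrite /entry /= -cats1 onth_cat.
  case: ltnP => _ h'; first by left.
  move/onth1P: h' => [_ [-> ->]]; right; by exists a, b.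
- by rewrite /entry /= onth0n.
- by exists t', a, b.
Qed.

Definition spec (P : finType) V (s : lstate P V) (e : event P V) (i : P) (m : msg P V) : Prop :=
  match m with
  | MReady => e = EA5
  | MConfirm => e = EA6 \/ e = EA7
  | MAck => exists k' m0, e = EA4 P V k' /\ entry s k' = Some (i, m0)
  | MDistS S0 => e = EA3 /\ S0 = Sset s
  | MDistT T0 => e = EA8 /\ T0 = Tset s
  end.

Lemma sends_spec (P : finType) V (s : lstate P V) e k i m :
  onth (sends s e) k = Some (i, m) -> spec s e i m.
Proof.
case: e => [x|j x|j a b m'|||||||||] //=; try (by rewrite onth0n);
  try (by rewrite /to_all onth_map; case: onth => //= q [_ <-]; simpl; auto).
move=> n; case he: (entry s n) => [[j m0]|]; last by rewrite onth0n.
by move/onth1P => [_ [<- <-]] /=; exists n, m0.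
Qed.

Lemma mem_to_all (P : finType) V (m : msg P V) (i : P) :
  exists k, onth (to_all m) k = Some (i, m).
Proof.
have /onthP [k hk] : i \in enum P by rewrite mem_enum.
by exists k; rewrite /to_all onth_map hk.
Qed.

Lemma fin_max (P : finType) (Pr : P -> nat -> Prop) (A : {set P}) :
  (forall p t t', t <= t' -> Pr p t -> Pr p t') ->
  (forall p, p \in A -> exists t, Pr p t) ->
  exists t0, forall p, p \in A -> forall t, t0 <= t -> Pr p t.
Proof.
move=> mono h.
suff [t0 H0] : exists t0, forall p, p \in enum A -> Pr p t0.
  exists t0 => p pA t le; apply: mono le _; apply: H0; by rewrite mem_enum.
have : forall p, p \in enum A -> exists t, Pr p t by move=> p; rewrite mem_enum; apply h.
elim: (enum A) => [|a s IH] hs; first by exists 0.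
have [ta hta] := hs a (mem_head _ _).
have [ts hts] : exists t0, forall p, p \in s -> Pr p t0.
  by apply: IH => p hp; apply: hs; rewrite inE hp orbT.
exists (maxn ta ts) => p; rewrite inE => /orP [/eqP ->|hp].
  apply: mono hta; exact: leq_maxl.
apply: mono (hts p hp); exact: leq_maxr.
Qed.

Lemma gmax_correct (P : finType) (FP Qs : P -> {set {set P}}) F i :
  in_Gmax FP Qs F i -> i \notin F.
Proof. by case=> G hG iG; case: (hG i iG) => [[]]. Qed.

Lemma gmax_wise (P : finType) (FP Qs : P -> {set {set P}}) F i :
  in_Gmax FP Qs F i -> in_star (FP i) F.
Proof. by case=> G hG iG; case: (hG i iG) => [[]]. Qed.

Lemma gmax_quorum (P : finType) (FP Qs : P -> {set {set P}}) F i :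
  in_Gmax FP Qs F i -> exists2 Q, Q \in Qs i & forall j, j \in Q -> in_Gmax FP Qs F j.
Proof.
case=> G hG iG; case: (hG i iG) => _ [Q hQ sub]; exists Q => // j jQ.
by exists G => //; exact: (subsetP sub).
Qed.

Lemma cons_inter (P : finType) (FP Qs : P -> {set {set P}}) F i j Qi Qj :
  is_abqs FP Qs -> in_Gmax FP Qs F i -> in_Gmax FP Qs F j -> Qi \in Qs i -> Qj \in Qs j ->
  exists x, [/\ x \in Qi, x \in Qj & x \notin F].
Proof.
case=> hc _ gi gj qi qj.
have := hc i j Qi Qj F qi qj (gmax_wise gi) (gmax_wise gj).
by case/subsetPn => x; rewrite inE => /andP [a b] c; exists x.
Qed.

Lemma guild_inter (P : finType) (FP Qs : P -> {set {set P}}) F i Q :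
  is_abqs FP Qs -> in_Gmax FP Qs F i -> Q \in Qs i -> exists x, x \in Q /\ in_Gmax FP Qs F x.
Proof.
move=> hq gi qi; have [Q' q' sub] := gmax_quorum gi.
have [x [a b _]] := cons_inter hq gi gi qi q'; exists x; split => //; exact: sub.
Qed.

Lemma kernel_guild (P : finType) (FP Qs : P -> {set {set P}}) F i K :
  in_Gmax FP Qs F i -> is_kernel Qs i K -> exists x, x \in K /\ in_Gmax FP Qs F x.
Proof.
move=> gi hk; have [Q' q' sub] := gmax_quorum gi.
have /set0Pn [x] := hk _ q'; rewrite inE => /andP [a b]; exists x; split => //; exact: sub.
Qed.

Lemma kernel_of (P : finType) (FP Qs : P -> {set {set P}}) F j k Q' :
  is_abqs FP Qs -> in_Gmax FP Qs F j -> in_Gmax FP Qs F k -> Q' \in Qs j ->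
  is_kernel Qs k (Q' :\: F).
Proof.
move=> hq gj gk q' Q qQ; have [x [a b c]] := cons_inter hq gj gk q' qQ.
by apply/set0Pn; exists x; rewrite !inE a b c.
Qed.


Lemma recv_origin (P : finType) V (FP Qs : P -> {set {set P}}) F (ev : trace P V) i j t k m :
  AG_execution FP Qs F ev -> i \notin F -> j \notin F ->
  entry (st ev i t) k = Some (j, m) ->
  exists s e, s < t /\ ev s = Some (j, e) /\ spec (st ev j s) e i m.
Proof.
case=> _ [_ [_ [Hauth _]]] hi hj /entry_event [t' [a [b [lt he]]]].
have [la [hs _]] := Hauth _ _ _ _ _ _ hi hj he.
move: hs; rewrite /sent_at; case hea: (ev a) => [[q e]|]; last by rewrite onth0n.
case: eqP => [eq|_]; last by rewrite onth0n.
move=> /sends_spec hsp; subst q; exists a, e; split => //; exact: ltn_trans lt.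
Qed.

Lemma send_reach (P : finType) V (FP Qs : P -> {set {set P}}) F (ev : trace P V) j i s e m :
  AG_execution FP Qs F ev -> j \notin F -> i \notin F -> ev s = Some (j, e) ->
  (exists k, onth (sends (st ev j s) e) k = Some (i, m)) ->
  exists t k', entry (st ev i t) k' = Some (j, m).
Proof.
case=> _ [_ [_ [_ [Hrel _]]]] hj hi hs [k hk].
have : onth (sent_at ev j s) k = Some (i, m) by rewrite /sent_at hs eqxx.
move=> /(Hrel _ _ _ _ _ hi hj) [tr htr].
exists tr.+1, (size (inbox (st ev i tr))).
by rewrite /entry (st_step htr) /= -cats1 onth_cat ltnn subnn.
Qed.

Lemma send_all (P : finType) V (FP Qs : P -> {set {set P}}) F (ev : trace P V) j i s e m :
  AG_execution FP Qs F ev -> j \notin F -> i \notin F -> ev s = Some (j, e) ->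
  sends (st ev j s) e = to_all m ->
  exists t k', entry (st ev i t) k' = Some (j, m).
Proof.
move=> hx hj hi hs he; apply: send_reach hx hj hi hs _.
by rewrite he; apply: mem_to_all.
Qed.

Lemma fair_ev (P : finType) V (FP Qs : P -> {set {set P}}) F (ev : trace P V) i e t0 :
  AG_execution FP Qs F ev -> i \notin F -> local_action e ->
  (forall t, t0 <= t -> enabled Qs i (st ev i t) e \/ exists t', ev t' = Some (i, e)) ->
  exists t, ev t = Some (i, e).
Proof.
case=> _ [_ [Hfair _]] hi hl h.
case: (classic (exists t, ev t = Some (i, e))) => // hn.
have [t _ ht] := Hfair i e t0 hi hl (fun t le => match h t le with
  | or_introl x => x | or_intror y => False_ind _ (hn y) end).
by exists t.
Qed.

Lemma TsubS (P : finType) V (FP Qs : P -> {set {set P}}) F (ev : trace P V) i t :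
  AG_execution FP Qs F ev -> i \notin F -> psubset (Tset (st ev i t)) (Sset (st ev i t)).
Proof.
case=> Hen _ hi; elim: t => [//|t IH].
case: (st_cases ev i t) => [->//|[e [he ->]]].
move: (Hen t i e he hi); case: e {he} => [x|j x|j a b m||n|n|||||n|] /=; try (by move=> _).
- by move=> _ z /IH; left.
- move=> [_ [[j [Sj [he hsub]]] _]]; rewrite he => z [/IH|/hsub] //.
Qed.

Lemma deliver (P : finType) V (FP Qs : P -> {set {set P}}) F (ev : trace P V) m k t :
  AG_execution FP Qs F ev -> in_Gmax FP Qs F m -> in_Gmax FP Qs F k ->
  exists t', psubset (Sset (st ev m t)) (Sset (st ev k t')).
Proof.
move=> hx gm gk.
have hx' := hx; case: hx' => _ [_ [_ [_ [_ [_ [Harb2 [Harb3 _]]]]]]].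
suff [t0 h0] : exists t0, forall p, p \in [set: P] -> forall t', t0 <= t' ->
    forall x, Sset (st ev m t) (p, x) -> Sset (st ev k t') (p, x).
  exists t0 => -[p x] hp; apply: (h0 p (in_setT p) t0 (leqnn _) x hp).
apply: fin_max => [p t1 t2 le h x hp|]; first exact: (S_mono (ev:=ev) (i:=k) le (h x hp)).
move=> p _.
case: (classic (exists x, Sset (st ev m t) (p, x))) => [[x hpx]|hn]; last first.
  by exists 0 => x hpx; case: hn; exists x.
have [t1 [_ h1]] := S_event hpx.
have [t2 [x' h2]] := Harb3 p m t1 x gm h1 k gk.
exists t2.+1 => x'' hpx''.
have [t1'' [_ h1'']] := S_event hpx''.
have e1 := Harb2 p m k t1'' t2 x'' x' gm gk h1'' h2.
by rewrite (st_step h2) /= e1; right.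
Qed.

Lemma fired_ev (P : finType) V (ev : trace P V) i (f : lstate P V -> Prop) e0 t :
  (forall s e, f (step s e) -> f s \/ e = e0) -> ~ f (init_state P V) ->
  f (st ev i t) -> exists t', ev t' = Some (i, e0).
Proof.
move=> hs h0 hf.
have [t' [e [_ [E he]]]] := flag_event (f := f) (E := fun e => e = e0) hs h0 hf.
by subst; exists t'.
Qed.

Lemma f3 (P : finType) V (ev : trace P V) i t : fired3 (st ev i t) -> exists t', ev t' = Some (i, EA3).
Proof. by apply: fired_ev => // s [x|j x|j a b m||n|n|||||n|] /=; auto. Qed.
Lemma f5 (P : finType) V (ev : trace P V) i t : fired5 (st ev i t) -> exists t', ev t' = Some (i, EA5).
Proof. by apply: fired_ev => // s [x|j x|j a b m||n|n|||||n|] /=; auto. Qed.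
Lemma f6 (P : finType) V (ev : trace P V) i t : fired6 (st ev i t) -> exists t', ev t' = Some (i, EA6).
Proof. by apply: fired_ev => // s [x|j x|j a b m||n|n|||||n|] /=; auto. Qed.
Lemma f7 (P : finType) V (ev : trace P V) i t : fired7 (st ev i t) -> exists t', ev t' = Some (i, EA7).
Proof. by apply: fired_ev => // s [x|j x|j a b m||n|n|||||n|] /=; auto. Qed.
Lemma f8 (P : finType) V (ev : trace P V) i t : fired8 (st ev i t) -> exists t', ev t' = Some (i, EA8).
Proof. by apply: fired_ev => // s [x|j x|j a b m||n|n|||||n|] /=; auto. Qed.

Lemma conf_kind (P : finType) V (m : msg P V) : isConfirm m -> m = MConfirm.
Proof. by case: m. Qed.
Lemma ready_kind (P : finType) V (m : msg P V) : isReady m -> m = MReady.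
Proof. by case: m. Qed.
Lemma ack_kind (P : finType) V (m : msg P V) : isAck m -> m = MAck.
Proof. by case: m. Qed.

Lemma received_mono (P : finType) V (ev : trace P V) i t t' j kind :
  t <= t' -> received (st ev i t) j kind -> received (st ev i t') j kind.
Proof.
move=> le [k [m [he hk]]]; exists k, m; split => //; exact: entry_mono le he.
Qed.

Lemma quorum_ev (P : finType) V (ev : trace P V) k (Q : {set P}) kind :
  (forall x, x \in Q -> exists t, received (st ev k t) x kind) ->
  exists t0, forall t, t0 <= t -> forall x, x \in Q -> received (st ev k t) x kind.
Proof.
move=> h; have [t0 h0] := @fin_max P (fun x t => received (st ev k t) x kind) Q
  (fun p t1 t2 le hp => received_mono le hp) h.
by exists t0 => t le x xQ; apply: h0.
Qed.

Lemma guild_quorum_recv (P : finType) V (FP Qs : P -> {set {set P}}) F (ev : trace P V) k m kind :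
  AG_execution FP Qs F ev -> kind m -> in_Gmax FP Qs F k ->
  (forall x, in_Gmax FP Qs F x -> exists s e, ev s = Some (x, e) /\ sends (st ev x s) e = to_all m) ->
  exists2 Q, Q \in Qs k & exists t0, forall t, t0 <= t -> forall x, x \in Q -> received (st ev k t) x kind.
Proof.
move=> hx hk gk hall; have [Q qQ sub] := gmax_quorum gk; exists Q => //.
apply: quorum_ev => x xQ; have gx := sub x xQ.
have [s [e [hs he]]] := hall x gx.
have [t [k' hk']] := send_all (i := k) hx (gmax_correct gx) (gmax_correct gk) hs he.
by exists t, k', m.
Qed.

Lemma fire_flag (P : finType) V (FP Qs : P -> {set {set P}}) F (ev : trace P V) i e
   (flag Gd : lstate P V -> Prop) t0 :
  AG_execution FP Qs F ev -> i \notin F -> local_action e ->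
  (forall s, ~ flag s -> Gd s -> enabled Qs i s e) ->
  (forall t, flag (st ev i t) -> exists t', ev t' = Some (i, e)) ->
  (forall t, t0 <= t -> Gd (st ev i t)) ->
  exists t, ev t = Some (i, e).
Proof.
move=> hx hi hl hen hfl hg; apply: (fair_ev (t0 := t0)) hx hi hl _ => t le.
case: (classic (flag (st ev i t))) => hf; first by right; exact: hfl hf.
by left; apply: hen hf (hg t le).
Qed.

Lemma A8_some_all (P : finType) V (FP Qs : P -> {set {set P}}) F (ev : trace P V) :
  is_abqs FP Qs -> AG_execution FP Qs F ev ->
  (exists j t, in_Gmax FP Qs F j /\ ev t = Some (j, EA8)) ->
  forall k, in_Gmax FP Qs F k -> exists t, ev t = Some (k, EA8).
Proof.
move=> hq hx [j [t8 [gj h8]]].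
have hx' := hx; case: hx' => Hen _.
have [_ [Q' q' hQ']] := Hen t8 j EA8 h8 (gmax_correct gj).
have A7 : forall k, in_Gmax FP Qs F k -> exists t, ev t = Some (k, EA7).
  move=> k gk.
  have [t0 h0] : exists t0, forall t, t0 <= t -> forall x, x \in Q' :\: F ->
      received (st ev k t) x isConfirm.
    apply: quorum_ev => x; rewrite inE => /andP [xF xQ].
    have [idx [mm [he /conf_kind hk]]] := hQ' x xQ; subst mm.
    have [s [e [_ [hs hsp]]]] := recv_origin hx (gmax_correct gj) xF he.
    have he' : sends (st ev x s) e = to_all MConfirm by case: hsp => ->.
    have [t [k' hk']] := send_all (i := k) hx xF (gmax_correct gk) hs he'.
    by exists t, k', MConfirm.
  apply: (fire_flag (flag := fun s => fired7 s)
     (Gd := fun s => forall x, x \in Q' :\: F -> received s x isConfirm) (t0 := t0) hx) => //.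
  - exact: gmax_correct gk.
  - move=> s hf hg; split => //; exists (Q' :\: F) => //; exact: kernel_of hq gj gk q'.
  - by move=> t /f7.
move=> k gk.
have [Q qQ [t0 h0]] := guild_quorum_recv (m := MConfirm) (kind := isConfirm) hx I gk
  (fun x gx => let: ex_intro t ht := A7 x gx in ex_intro _ t (ex_intro _ EA7 (conj ht erefl))).
apply: (fire_flag (flag := fun s => fired8 s)
     (Gd := fun s => forall x, x \in Q -> received s x isConfirm) (t0 := t0) hx) => //.
- exact: gmax_correct gk.
- by move=> s hf hg; split => //; exists Q.
- by move=> t /f8.
Qed.

Lemma A8_some (P : finType) V (FP Qs : P -> {set {set P}}) F (ev : trace P V) :
  is_abqs FP Qs -> exec_with_guild FP Qs F -> AG_execution FP Qs F ev ->
  exists j t, in_Gmax FP Qs F j /\ ev t = Some (j, EA8).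
Proof.
move=> hq hg hx.
have hx' := hx; case: hx' => Hen [Hprop [_ [_ [_ [Harb1 _]]]]].
apply: NNPP => hn.
have noA8 : forall k t, in_Gmax FP Qs F k -> ~ sentT (st ev k t).
  move=> k t gk /sentT_event [t' [_ h]]; apply: hn; by exists k, t'.
have A5all : forall h, in_Gmax FP Qs F h -> exists t, ev t = Some (h, EA5).
  move=> h gh.
  have [s3 h3] : exists t, ev t = Some (h, EA3).
    have [Q qQ sub] := gmax_quorum gh.
    have [t0 h0] : exists t0, forall p, p \in Q -> forall t, t0 <= t ->
        exists x, Sset (st ev h t) (p, x).
      apply: fin_max => [p t1 t2 le [x hx1]|p pQ].
        by exists x; exact: (S_mono (ev := ev) (i := h) le hx1).
      have [x hc] := Hprop p (gmax_correct (sub p pQ)).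
      have [t hd] := Harb1 p x (gmax_correct (sub p pQ)) hc h gh.
      by exists t.+1, x; rewrite (st_step hd) /=; right.
    apply: (fire_flag (flag := fun s => fired3 s)
      (Gd := fun s => forall p, p \in Q -> exists x, Sset s (p, x)) (t0 := t0) hx) => //.
    - exact: gmax_correct gh.
    - by move=> s hf hgd; split => //; exists Q.
    - by move=> t /f3.
    - by move=> t le p pQ; apply: h0.
  have acks : forall k, in_Gmax FP Qs F k -> exists t, received (st ev h t) k isAck.
    move=> k gk.
    have [tr [idx he]] := send_all (i := k) hx (gmax_correct gh) (gmax_correct gk) h3 (erefl _).
    have [tS hS] := deliver s3 hx gh gk.
    have [t4 h4] : exists t, ev t = Some (k, EA4 P V idx).
      apply: (fair_ev (t0 := maxn tr tS) (e := EA4 P V idx) hx (gmax_correct gk) I) => t le.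
      case: (classic (handled (st ev k t) idx)) => [hh|hh].
        right; have [t' [e [_ [hE he']]]] := handled_event hh.
        have en := Hen t' k e he' (gmax_correct gk).
        case: hE => [E|[E|E]]; subst e.
        + by exists t'.
        + by case: en => _ [_ hsT]; case: (noA8 k t' gk hsT).
        + case: en => _ [j [Tj [he2 _]]].
          by have := entry_det he he2.
      left; split => //; split; last exact: noA8 k t gk.
      exists h, (Sset (st ev h s3)); split.
        exact: entry_mono (leq_trans (leq_maxl _ _) le) he.
      by move=> z /hS; apply: (S_mono (ev := ev) (i := k) (leq_trans (leq_maxr _ _) le)).
    have [_ [[j [Sj [he4 _]]] _]] := Hen t4 k _ h4 (gmax_correct gk).
    have [ejh _] := entry_det he he4; subst j.
    have [t [k' hk']] : exists t k', entry (st ev h t) k' = Some (k, MAck).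
      apply: (send_reach hx (gmax_correct gk) (gmax_correct gh) h4).
      by exists 0; rewrite /= he4.
    by exists t, k', MAck.
  have [Q qQ sub] := gmax_quorum gh.
  have [t0 h0] := quorum_ev (fun x xQ => acks x (sub x xQ)).
  apply: (fire_flag (flag := fun s => fired5 s)
      (Gd := fun s => forall p, p \in Q -> received s p isAck) (t0 := t0) hx) => //.
  - exact: gmax_correct gh.
  - by move=> s hf hgd; split => //; exists Q.
  - by move=> t /f5.
have A6all : forall k, in_Gmax FP Qs F k -> exists t, ev t = Some (k, EA6).
  move=> k gk.
  have [Q qQ [t0 h0]] := guild_quorum_recv (m := MReady) (kind := isReady) hx I gk
    (fun x gx => let: ex_intro t ht := A5all x gx in ex_intro _ t (ex_intro _ EA5 (conj ht erefl))).
  apply: (fire_flag (flag := fun s => fired6 s)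
     (Gd := fun s => forall x, x \in Q -> received s x isReady) (t0 := t0) hx) => //.
  - exact: gmax_correct gk.
  - by move=> s hf hgd; split => //; exists Q.
  - by move=> t /f6.
case: hg => G hG /set0Pn [k kG]; have gk : in_Gmax FP Qs F k by exists G.
have [Q qQ [t0 h0]] := guild_quorum_recv (m := MConfirm) (kind := isConfirm) hx I gk
  (fun x gx => let: ex_intro t ht := A6all x gx in ex_intro _ t (ex_intro _ EA6 (conj ht erefl))).
have [t8 h8] : exists t, ev t = Some (k, EA8).
  apply: (fire_flag (flag := fun s => fired8 s)
     (Gd := fun s => forall x, x \in Q -> received s x isConfirm) (t0 := t0) hx) => //.
  - exact: gmax_correct gk.
  - by move=> s hf hgd; split => //; exists Q.
  - by move=> t /f8.
by apply: hn; exists k, t8.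
Qed.

Lemma first_confirm (P : finType) V (FP Qs : P -> {set {set P}}) F (ev : trace P V) :
  is_abqs FP Qs -> AG_execution FP Qs F ev ->
  forall n t j, t < n -> in_Gmax FP Qs F j ->
  (ev t = Some (j, EA6) \/ ev t = Some (j, EA7)) ->
  exists h t', in_Gmax FP Qs F h /\ ev t' = Some (h, EA5).
Proof.
move=> hq hx; have hx' := hx; case: hx' => Hen _.
elim=> [//|n IH] t j lt gj [h6|h7].
- have [_ [Q qQ hQ]] := Hen t j _ h6 (gmax_correct gj).
  have [x [xQ gx]] := guild_inter hq gj qQ.
  have [idx [mm [he /ready_kind hk]]] := hQ x xQ; subst mm.
  have [s [e [_ [hs hsp]]]] := recv_origin hx (gmax_correct gj) (gmax_correct gx) he.
  by exists x, s; split => //; rewrite hs /= -hsp.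
- have [_ [K hK hKr]] := Hen t j _ h7 (gmax_correct gj).
  have [x [xK gx]] := kernel_guild gj hK.
  have [idx [mm [he /conf_kind hk]]] := hKr x xK; subst mm.
  have [s [e [lts [hs hsp]]]] := recv_origin hx (gmax_correct gj) (gmax_correct gx) he.
  apply: (IH s x) => //; first exact: leq_trans lts lt.
  by case: hsp => <-; auto.
Qed.

Theorem lemma3p7 (P : finType) (V : Type) (FP Qs : P -> {set {set P}})
  (F : {set P}) (ev : trace P V) :
  is_abqs FP Qs ->
  exec_with_guild FP Qs F ->
  AG_execution FP Qs F ev ->
  exists2 i, in_Gmax FP Qs F i &
    exists t (Si : pset P V), Ssent (st ev i t) = Some Si /\
      forall k, in_Gmax FP Qs F k ->
        exists t', psubset Si (Uset (st ev k t')).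
Proof.
move=> hq hg hx.
have hx' := hx; case: hx' => Hen _.
have hsome := A8_some hq hg hx.
have A8all := A8_some_all hq hx hsome.
case: hsome => [k [t8 [gk h8]]].
have [h [t5 [gh h5]]] : exists h t', in_Gmax FP Qs F h /\ ev t' = Some (h, EA5).
  have [_ [Q' q' hQ']] := Hen t8 k _ h8 (gmax_correct gk).
  have [x [xQ gx]] := guild_inter hq gk q'.
  have [idx [mm [he /conf_kind hk]]] := hQ' x xQ; subst mm.
  have [s [e [_ [hs hsp]]]] := recv_origin hx (gmax_correct gk) (gmax_correct gx) he.
  apply: (first_confirm hq hx (n := s.+1) (t := s) (j := x)) => //.
  by case: hsp => <-; auto.
have [_ [Q3 q3 hQ3]] := Hen t5 h _ h5 (gmax_correct gh).
have [m [mQ gm]] := guild_inter hq gh q3.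
have [idx [mm [he /ack_kind hk]]] := hQ3 m mQ; subst mm.
have [s [e [_ [hs [k' [m0 [ee he0]]]]]]] :=
  recv_origin hx (gmax_correct gh) (gmax_correct gm) he.
subst e.
have [_ [[j [Sj [he' hsub]]] hns]] := Hen s m _ hs (gmax_correct gm).
have [ejh em0] := entry_det he0 he'; subst j m0.
have [s' [e' [_ [hs' [ee' eSj]]]]] :=
  recv_origin hx (gmax_correct gm) (gmax_correct gh) he'.
subst e'.
exists h => //; exists s'.+1, Sj; split.
  by rewrite (st_step hs') /= eSj.
move=> k2 gk2.
have hT : psubset Sj (Tset (st ev m s.+1)) by rewrite (st_step hs) /= he' => z hz; right.
have [t8m h8m] := A8all m gm.
have lt : s < t8m.
  case: (ltnP s t8m) => // le; exfalso.
  move: le; rewrite leq_eqVlt => /orP [/eqP eq|lt'].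
    by subst; rewrite h8m in hs.
  apply: hns; apply: (sentT_mono (ev := ev) (i := m) lt').
  by rewrite (st_step h8m).
have hT8 : psubset Sj (Tset (st ev m t8m)).
  by move=> z /hT; apply: (T_mono (ev := ev) (i := m) lt).
have [tr [idx2 he2]] := send_all (i := k2) hx (gmax_correct gm) (gmax_correct gk2) h8m (erefl _).
have [tS hS] := deliver t8m hx gm gk2.
have hTS := TsubS (t := t8m) hx (gmax_correct gm).
have [t9 h9] : exists t, ev t = Some (k2, EA9 P V idx2).
  apply: (fair_ev (t0 := maxn tr tS) (e := EA9 P V idx2) hx (gmax_correct gk2) I) => t le.
  case: (classic (handled (st ev k2 t) idx2)) => [hh|hh].
    right; have [t' [e [_ [hE he3]]]] := handled_event hh.
    have en := Hen t' k2 e he3 (gmax_correct gk2).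
    case: hE => [E|[E|E]]; subst e.
    + case: en => _ [[j [Sj' [he4 _]]] _].
      by have := entry_det he2 he4.
    + case: en => _ [[j [Sj' [he4 _]]] _].
      by have := entry_det he2 he4.
    + by exists t'.
  left; split => //.
  exists m, (Tset (st ev m t8m)); split.
    exact: entry_mono (leq_trans (leq_maxl _ _) le) he2.
  by move=> z /hTS /hS; apply: (S_mono (ev := ev) (i := k2) (leq_trans (leq_maxr _ _) le)).
exists t9.+1.
have [_ [j [Tj [he9 _]]]] := Hen t9 k2 _ h9 (gmax_correct gk2).
have [ejm eTj] := entry_det he2 he9; subst j Tj.
by rewrite (st_step h9) /= he9 => z /hT8 hz; right.
Qed.
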